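(* Let $f_1(z)=\dfrac{2(z^2-\frac34)^3}{z^2(z^2-\frac98)^2}-1$. For every $n\ge1$ and every point $v\in\widehat{\mathbb{C}}$ with $f_1^n(v)=\infty$, the local degree satisfies $\deg(f_1^n,v)=2$; equivalently, every $a$-flower of level $n\ge1$ has degree $2$.
   Context: $\operatorname{post}(f_1)=\{-1,1,\infty\}$. An $n$-vertex is a point of $f_1^{-n}(\{-1,1,\infty\})$; it is of type $a$ if $f_1^n(v)=\infty$. The flower $W^n(v)$ of an $n$-vertex $v$ is the union of the closures of the components of $\widehat{\mathbb{C}}\setminus f_1^{-n}(\widehat{\mathbb{R}})$ that contain $v$, and its degree is $\deg(f_1^n,v)$; an $a$-flower is a flower centered at an $n$-vertex of type $a$. *)

(* Defs.v *)
From mathcomp Require Import all_boot all_order all_algebra complex.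
From mathcomp Require Import reals.
Set Implicit Arguments. Unset Strict Implicit. Unset Printing Implicit Defensive.
Import Order.TTheory GRing.Theory Num.Theory.
Local Open Scope ring_scope.

Section RatMaps.
Variable C : fieldType.

(* The Riemann sphere: [Some z] is the finite point z, [None] is infinity. *)
Definition sphere := option C.

(* A rational function A/B is represented by a pair (A, B) of polynomials
   (B <> 0); no coprimality is required, everything below only depends on
   the quotient A/B. *)
Definition ratfun := ({poly C} * {poly C})%type.

(* Order (valuation) of A/B at a point of the sphere:
   ord_a = mult_a A - mult_a B at finite a, ord_oo = deg B - deg A
   (i.e. the order at 0 in the local parameter 1/z). *)
Definition rord (a : sphere) (r : ratfun) : int :=
  match a with
  | Some a => (mup a r.1)%:Z - (mup a r.2)%:Z
  | None => (size r.2)%:Z - (size r.1)%:Z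
  end.

Definition rvalue (r : ratfun) (a : sphere) : sphere :=
  if r.1 == 0 then Some 0 else
  let o := rord a r in
  if 0 < o then Some 0 else if o < 0 then None else
  match a with
  | Some a =>
      Some ((r.1 %/ ('X - a%:P) ^+ mup a r.1).[a]
            / (r.2 %/ ('X - a%:P) ^+ mup a r.2).[a])
  | None => Some (lead_coef r.1 / lead_coef r.2)
  end.

(* Local degree deg(phi, a) of the rational map phi = A/B at a:
   ord_a(phi - phi(a)) if phi(a) is finite, ord_a(1/phi) = -ord_a(phi)
   if phi(a) = infinity (orders taken in the local coordinate at a,
   i.e. z - a for finite a and 1/z at infinity). *)
Definition ldeg (r : ratfun) (a : sphere) : int :=
  match rvalue r a with
  | Some w => rord a (r.1 - w *: r.2, r.2)
  | None => - rord a r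
  end.

(* Composition g o h of rational functions:
   if g = A/B with d = max(deg A, deg B) and h = P/Q then
   g o h = (sum_i A_i P^i Q^(d-i)) / (sum_i B_i P^i Q^(d-i)). *)
Definition homog (d : nat) (p : {poly C}) (h : ratfun) : {poly C} :=
  \sum_(i < d.+1) p`_i *: (h.1 ^+ i * h.2 ^+ (d - i)).

Definition rcomp (g h : ratfun) : ratfun :=
  let d := (maxn (size g.1) (size g.2)).-1 in
  (homog d g.1 h, homog d g.2 h).

Definition rid : ratfun := ('X, 1).

Definition riter (g : ratfun) (n : nat) : ratfun := iter n (rcomp g) rid.

Definition f1den : {poly C} := 'X^2 * ('X^2 - (9%:R / 8%:R)%:P) ^+ 2.
Definition f1num : {poly C} :=
  2%:R *: ('X^2 - (3%:R / 4%:R)%:P) ^+ 3 - f1den.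
Definition f1 : ratfun := (f1num, f1den).

End RatMaps.

(* Main.v *)
Require Import Defs.
From mathcomp Require Import all_boot all_order all_algebra complex reals.
From mathcomp Require Import ring zify.
Set Implicit Arguments. Unset Strict Implicit. Unset Printing Implicit Defensive.
Import Order.TTheory GRing.Theory Num.Theory.
Local Open Scope ring_scope.

Section G.
Variable C : numFieldType.
Local Notation t := (3%:R / 4%:R : C).
Local Notation s := (9%:R / 8%:R : C).

Definition cN : seq C := [:: - (2%:R * t ^+ 3); 0; 6%:R * t ^+ 2 - s ^+ 2; 0;
   2%:R * s - 6%:R * t; 0; 1].
Definition cD : seq C := [:: 0; 0; s ^+ 2; 0; - (2%:R * s); 0; 1].

Lemma f1num_Poly : f1num C = Poly cN.
Proof.
rewrite /f1num /f1den /cN /= !cons_poly_def ?mul0r ?add0r.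
rewrite -?mul_polyC; ring.
Qed.

Lemma f1den_Poly : f1den C = Poly cD.
Proof.
rewrite /f1den /cD /= !cons_poly_def ?mul0r ?add0r.
rewrite -?mul_polyC; ring.
Qed.
Lemma cN_last : last 1 cN != 0. Proof. by rewrite /= oner_neq0. Qed.
Lemma cD_last : last 1 cD != 0. Proof. by rewrite /= oner_neq0. Qed.

Definition Nh (A B : {poly C}) := 2%:R * (A^+2 - t%:P * B^+2)^+3 - A^+2 * (A^+2 - s%:P * B^+2)^+2.
Definition Dh (A B : {poly C}) := A^+2 * (A^+2 - s%:P * B^+2)^+2.

Lemma rcomp_f1 h : rcomp (f1 C) h = (Nh h.1 h.2, Dh h.1 h.2).
Proof.
rewrite /rcomp /f1 /= f1num_Poly f1den_Poly /homog.
rewrite !(PolyK cN_last) !(PolyK cD_last) /=.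
rewrite !big_ord_recr big_ord0 /= /Nh /Dh.
rewrite !big_ord0 !subSS !subn0 ?subnn; congr pair; rewrite -!mul_polyC; ring.
Qed.
Definition Ne (a b : C) := 2%:R * (a^+2 - t * b^+2)^+3 - a^+2 * (a^+2 - s * b^+2)^+2.
Definition De (a b : C) := a^+2 * (a^+2 - s * b^+2)^+2.

Lemma n4 : (4%:R : C) != 0. Proof. by rewrite pnatr_eq0. Qed.
Lemma n8 : (8%:R : C) != 0. Proof. by rewrite pnatr_eq0. Qed.
Lemma t_neq0 : t != 0. Proof. by rewrite mulf_neq0 ?invr_eq0 ?pnatr_eq0. Qed.
Lemma s_neq0 : s != 0. Proof. by rewrite mulf_neq0 ?invr_eq0 ?pnatr_eq0. Qed.
Lemma ts3 : 3%:R * t = 2%:R * s.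
Proof. by field. Qed.
Lemma De11 : De 1 1 = 1 / 64%:R.
Proof. by rewrite /De; field. Qed.
Lemma Ne11 : Ne 1 1 = De 1 1.
Proof. by rewrite /De /Ne; field. Qed.
Lemma t_neq_s : t != s.
Proof.
apply/eqP => ets; have := ts3; rewrite ets => /eqP.
by rewrite -subr_eq0 -mulrBl mulf_eq0 (negbTE s_neq0) orbF subr_eq0 eqr_nat.
Qed.

Lemma NZ a b : Ne a b = 0 -> De a b = 0 -> a = 0 /\ b = 0.
Proof.
rewrite /Ne /De => hN hD; rewrite hD subr0 in hN.
move/eqP: hN; rewrite mulf_eq0 pnatr_eq0 /= expf_eq0 /= subr_eq0 => /eqP hat.
have b0 : b = 0.
  move/eqP: hD; rewrite mulf_eq0 => /orP[|]; rewrite expf_eq0 /=.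
    move=> /eqP a0; move: hat; rewrite a0 expr0n /= => /esym/eqP.
    by rewrite mulf_eq0 (negbTE t_neq0) /= expf_eq0 /= => /eqP.
  rewrite subr_eq0 => /eqP hs.
  have : (t - s) * b ^+ 2 = 0 by rewrite mulrBl -hat -hs subrr.
  by move/eqP; rewrite mulf_eq0 subr_eq0 (negbTE t_neq_s) /= expf_eq0 /= => /eqP.
split => //; move/eqP: hat; rewrite b0 expr0n /= mulr0 expf_eq0 /=.
by move/eqP.
Qed.

Definition Wr (A B : {poly C}) := A^`() * B - A * B^`().
Definition Jh (A B : {poly C}) := (24%:R : C)%:P * (A^+2 - t%:P * B^+2)^+2 * A * B * (A^+2 - s%:P * B^+2)
   * ((3%:R * t - 2%:R * s)%:P * A^+2 - (t * s)%:P * B^+2).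

Lemma Wr_step A B : 6%:R * Wr (Nh A B) (Dh A B) = Jh A B * Wr A B.
Proof.
rewrite /Wr /Nh /Dh /Jh !(derivB, derivD, derivM, deriv_exp, derivC) /=.

ring.
Qed.

Lemma mup1 (p : {poly C}) x : root p x -> p^`().[x] != 0 -> mup x p = 1%N.
Proof.
move=> rp dp.
have p0 : p != 0 by apply: contra dp => /eqP ->; rewrite deriv0 horner0.
apply/eqP; rewrite eqn_leq mup_leq // mup_geq // expr1 dvdp_XsubCl rp andbT.
apply/negP => /dvdpP [q hq]; move: dp; rewrite hq !(derivM, derivD, derivB, derivC, derivX, derivN) /=.
by rewrite !hornerE /= subrr !(mulr0, mul0r, add0r, addr0) eqxx.
Qed.
Definition Je (a b : C) := 24%:R * (a^+2 - t * b^+2)^+2 * a * b * (a^+2 - s * b^+2)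
   * ((3%:R * t - 2%:R * s) * a^+2 - (t * s) * b^+2).

Lemma hornerNh A B v : (Nh A B).[v] = Ne A.[v] B.[v].
Proof. by rewrite /Nh /Ne !hornerE. Qed.
Lemma hornerDh A B v : (Dh A B).[v] = De A.[v] B.[v].
Proof. by rewrite /Dh /De !hornerE. Qed.
Lemma hornerJh A B v : (Jh A B).[v] = Je A.[v] B.[v].
Proof. by rewrite /Jh /Je !hornerE. Qed.

Lemma f1num_h : f1num C = Nh 'X 1.
Proof. by rewrite /f1num /Nh /f1den -!mul_polyC; ring. Qed.
Lemma f1den_h : f1den C = Dh 'X 1.
Proof. by rewrite /f1den /Dh; ring. Qed.

Lemma Je_eq0 a b : Je a b = 0 ->
  [\/ a^+2 = t * b^+2, a = 0, b = 0 | a^+2 = s * b^+2].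
Proof.
rewrite /Je ts3 subrr mul0r sub0r => /eqP h.
suff: [|| a^+2 == t * b^+2, a == 0, b == 0 | a^+2 == s * b^+2].
  by case/or4P => /eqP; [apply: Or41|apply: Or42|apply: Or43|apply: Or44].
move: h.
rewrite !mulf_eq0 pnatr_eq0 /= oppr_eq0 !mulf_eq0 !invr_eq0 !pnatr_eq0 /= !subr_eq0.
by case: (a^+2 == t * b^+2); case: (a == 0); case: (b == 0); case: (a^+2 == s * b^+2).
Qed.
Definition pt (a b : C) : sphere C := if b == 0 then None else Some (a / b).

Lemma f1num_neq0 : f1num C != 0.
Proof. by rewrite f1num_Poly -size_poly_eq0 (PolyK cN_last). Qed.
Lemma f1den_neq0 : f1den C != 0.
Proof. by rewrite f1den_Poly -size_poly_eq0 (PolyK cD_last). Qed.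

Lemma rvalue_some z : rvalue (f1 C) (Some z) = pt (Ne z 1) (De z 1).
Proof.
rewrite /rvalue /= (negbTE f1num_neq0) /pt.
have hN : (f1num C).[z] = Ne z 1 by rewrite f1num_h hornerNh hornerX hornerC.
have hD : (f1den C).[z] = De z 1 by rewrite f1den_h hornerDh hornerX hornerC.
case: (eqVneq (De z 1) 0) => hd.
  have hn : Ne z 1 != 0.
    by apply/eqP => hn; have [_] := NZ hn hd; apply/eqP; exact: oner_neq0.
  have -> : mup z (f1num C) = 0%N by apply: mupNroot; rewrite /root hN.
  have : (0 < mup z (f1den C))%N.
    by rewrite -XsubC_dvd ?f1den_neq0 // dvdp_XsubCl /root hD hd.
  move: (mup z (f1den C)) => m hm.
  have -> : (0 < 0%:Z - m%:Z) = false by lia.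
  by have -> : (0%:Z - m%:Z < 0) = true by lia.
have -> : mup z (f1den C) = 0%N by apply: mupNroot; rewrite /root hD.
case: (eqVneq (Ne z 1) 0) => hn.
  have : (0 < mup z (f1num C))%N.
    by rewrite -XsubC_dvd ?f1num_neq0 // dvdp_XsubCl /root hN hn.
  move: (mup z (f1num C)) => m hm.
  have -> : (0 < m%:Z - 0%:Z) = true by lia.
  by rewrite hn mul0r.
have -> : mup z (f1num C) = 0%N by apply: mupNroot; rewrite /root hN.
by rewrite subrr ltxx expr0 !divp1 hN hD.
Qed.

Lemma rvalue_none : rvalue (f1 C) None = Some 1.
Proof.
rewrite /rvalue /= (negbTE f1num_neq0) /rord /= f1num_Poly f1den_Poly.
rewrite /lead_coef !(PolyK cN_last) !(PolyK cD_last) /=.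
by rewrite divr1.
Qed.
Lemma Ne_a0 a : Ne a 0 = a ^+ 6.
Proof. by rewrite /Ne; ring. Qed.
Lemma De_a0 a : De a 0 = a ^+ 6.
Proof. by rewrite /De; ring. Qed.
Lemma Ne_hom a b c : Ne (c * a) (c * b) = c ^+ 6 * Ne a b.
Proof. by rewrite /Ne; ring. Qed.
Lemma De_hom a b c : De (c * a) (c * b) = c ^+ 6 * De a b.
Proof. by rewrite /De; ring. Qed.

Lemma pt_scale x y c : c != 0 -> pt (c * x) (c * y) = pt x y.
Proof.
move=> c0; rewrite /pt mulf_eq0 (negbTE c0) /=.
case: (eqVneq y 0) => // y0; by rewrite invfM mulrACA divff // mul1r.
Qed.

Lemma rvalue_pt a b : ~ (a = 0 /\ b = 0) -> rvalue (f1 C) (pt a b) = pt (Ne a b) (De a b).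
Proof.
move=> nz; rewrite {1}/pt; case: (eqVneq b 0) => [b0|b0].
  have a0 : a != 0 by apply/eqP => a0; exact: nz.
  rewrite rvalue_none b0 Ne_a0 De_a0 /pt expf_eq0 (negbTE a0) andbF.
  by rewrite divff // expf_neq0.
rewrite rvalue_some.
have -> : a / b = b^-1 * a by rewrite mulrC.
have e1 : (1 : C) = b^-1 * b by rewrite mulVf.
rewrite [X in Ne _ X]e1 [X in De _ X]e1 Ne_hom De_hom pt_scale //.
by rewrite expf_neq0 // invr_eq0.
Qed.
Definition Qp (x y : C) := (y = 0 /\ x != 0) \/ (y != 0 /\ (x = y \/ x = - y)).
Definition one (x y : C) := y != 0 /\ x = y.

Lemma De_nz_of a b : ~ (a = 0 /\ b = 0) -> De a b = 0 -> Ne a b != 0.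
Proof. by move=> nz hD; apply/eqP => hN; apply: nz; exact: NZ. Qed.

Lemma crit a b : ~ (a = 0 /\ b = 0) -> Je a b = 0 -> Qp (Ne a b) (De a b).
Proof.
move=> nz /Je_eq0 [hat|a0|b0|hs].
- have e : Ne a b = - De a b.
    by rewrite /Ne /De hat subrr expr0n /= mulr0 sub0r.
  right; split; last by right.
  apply/eqP => hD; apply: nz; apply: NZ => //; by rewrite e hD oppr0.
- have hD : De a b = 0 by rewrite /De a0 expr0n /= mul0r.
  by left; split => //; apply: De_nz_of.
- have a0 : a != 0 by apply/eqP => a0; exact: nz.
  right; rewrite b0 Ne_a0 De_a0; split; [exact: expf_neq0 | by left].
- have hD : De a b = 0 by rewrite /De hs subrr expr0n /= mulr0.
  by left; split => //; apply: De_nz_of.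
Qed.

Lemma Ne_yy y : Ne y y = y ^+ 6 * De 1 1.
Proof. by rewrite -Ne11 -Ne_hom !mulr1. Qed.
Lemma De_yy y : De y y = y ^+ 6 * De 1 1.
Proof. by rewrite -De_hom !mulr1. Qed.
Lemma De11_neq0 : De 1 1 != 0.
Proof. by rewrite De11 mul1r invr_eq0 pnatr_eq0. Qed.

Lemma Qp_one x y : Qp x y -> one (Ne x y) (De x y).
Proof.
case=> [[-> x0]|[y0 [->|->]]].
- by rewrite Ne_a0 De_a0; split => //; exact: expf_neq0.
- rewrite Ne_yy -De_yy; split => //; rewrite De_yy.
  by apply: mulf_neq0; [exact: expf_neq0|exact: De11_neq0].
- have -> : Ne (- y) y = Ne y y by rewrite /Ne; ring.
  have -> : De (- y) y = De y y by rewrite /De; ring.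
  rewrite Ne_yy -De_yy; split => //; rewrite De_yy.
  by apply: mulf_neq0; [exact: expf_neq0|exact: De11_neq0].
Qed.

Lemma one_Qp x y : one x y -> Qp x y.
Proof. by case=> y0 ->; right; split => //; left. Qed.
Lemma mup_Dh A B v : ~ (A.[v] = 0 /\ B.[v] = 0) -> De A.[v] B.[v] = 0 ->
  (Wr A B).[v] != 0 -> mup v (Dh A B) = 2%N.
Proof.
move=> nz hD hW.
set a := A.[v] in nz hD; set b := B.[v] in nz hD.
set E := A ^+ 2 - s%:P * B ^+ 2.
have hE : E.[v] = a ^+ 2 - s * b ^+ 2 by rewrite /E !hornerE.
have hWv : (Wr A B).[v] = A^`().[v] * b - a * B^`().[v] by rewrite /Wr !hornerE.
rewrite /Dh -/E.
case: (eqVneq a 0) => a0.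
  have b0 : b != 0 by apply/eqP => b0; exact: nz.
  have Ev : E.[v] != 0.
    by rewrite hE a0 expr0n /= sub0r oppr_eq0 mulf_neq0 ?s_neq0 ?expf_neq0.
  rewrite mupMl; last by rewrite /root horner_exp expf_eq0 /= (negbTE Ev).
  have dA : A^`().[v] != 0.
    by apply: contra hW => /eqP h; rewrite hWv h a0 mul0r mul0r subrr.
  have A0 : A != 0 by apply: contra dA => /eqP ->; rewrite deriv0 horner0.
  by rewrite expr2 mupM // (mup1 (x := v) (p := A)) // /root -/a a0.
have hs : E.[v] = 0.
  by move/eqP: hD; rewrite /De mulf_eq0 !expf_eq0 /= (negbTE a0) /= -hE => /eqP.
have b0 : b != 0.
  apply/eqP => b0; move: hs; rewrite hE b0 expr0n /= mulr0 subr0 => /eqP.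
  by rewrite expf_eq0 /= (negbTE a0).
rewrite mupMr; last by rewrite /root hornerE expf_eq0 /= a0.
have dE : E^`().[v] != 0.
  have key : b * E^`().[v] = 2%:R * a * (Wr A B).[v].
    have : E^`().[v] = A^`().[v] * a + a * A^`().[v] - s * (B^`().[v] * b + b * B^`().[v]).
      by rewrite /E !(derivB, derivM, derivC) !hornerE /=.
    move=> ->; rewrite hWv.
    have hs' : a ^+ 2 = s * b ^+ 2 by apply/eqP; rewrite -subr_eq0 -hE hs.
    have -> : 2%:R * a * (A^`().[v] * b - a * B^`().[v]) =
              2%:R * a * b * A^`().[v] - 2%:R * a ^+ 2 * B^`().[v] by ring.
    rewrite hs'; ring.
  apply/eqP => h; move: key; rewrite h mulr0 => /esym/eqP.
  by rewrite !mulf_eq0 pnatr_eq0 /= (negbTE a0) (negbTE hW).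
have E0 : E != 0 by apply: contra dE => /eqP ->; rewrite deriv0 horner0.
by rewrite expr2 mupM // (mup1 (x := v) (p := E)) // /root hs.
Qed.
Local Notation F := (riter (f1 C)).
Lemma main_gen (n : nat) (v : sphere C) :
  (1 <= n)%N -> iter n (rvalue (f1 C)) v = None -> ldeg (riter (f1 C) n) v = 2%:Z.
Proof.
move=> n1; case: v => [z|]; last first.
  have h : forall k, iter k.+1 (rvalue (f1 C)) None = Some 1.
    elim=> [|k IH]; first by rewrite /= rvalue_none.
    rewrite iterS IH rvalue_some.
    by rewrite /pt Ne11 (negbTE De11_neq0) divff // De11_neq0.
  by case: n n1 => // k _; rewrite h.
have FS k : F k.+1 = (Nh (F k).1 (F k).2, Dh (F k).1 (F k).2).
  by rewrite /riter iterS rcomp_f1.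
pose a k := (F k).1.[z]; pose b k := (F k).2.[z].
have aS k : a k.+1 = Ne (a k) (b k) by rewrite /a FS /= hornerNh.
have bS k : b k.+1 = De (a k) (b k) by rewrite /b FS /= hornerDh.
have nz k : ~ (a k = 0 /\ b k = 0).
  elim: k => [|k IH].
    by rewrite /b /= hornerC => -[_ /eqP]; rewrite oner_eq0.
  by rewrite aS bS => -[h1 h2]; apply: IH; exact: NZ.
have it k : iter k (rvalue (f1 C)) (Some z) = pt (a k) (b k).
  elim: k => [|k IH].
    by rewrite /a /b /= hornerX hornerC /pt oner_eq0 divr1.
  by rewrite iterS IH rvalue_pt // aS bS.
pose w k := (Wr (F k).1 (F k).2).[z].
have wS k : 6%:R * w k.+1 = Je (a k) (b k) * w k.
  change (6%:R * (Wr (F k.+1).1 (F k.+1).2).[z] = Je (a k) (b k) * w k).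
  rewrite FS /= mulr_natl.
  have := congr1 (fun p => p.[z]) (Wr_step (F k).1 (F k).2).
  by rewrite /= !mulr_natl hornerMn hornerM hornerJh.
have w0 : w 0%N = 1.
  by rewrite /w /= /Wr derivX -[1 : {poly C}]/(1%:P) derivC !hornerE /= subr0.
have onek k : Je (a k) (b k) = 0 -> forall j, one (a (k.+2 + j)%N) (b (k.+2 + j)%N).
  move=> hJ; elim=> [|j IH].
    rewrite addn0 (aS k.+1) (bS k.+1); apply: Qp_one; rewrite (aS k) (bS k); exact: crit.
  rewrite addnS (aS (k.+2 + j)%N) (bS (k.+2 + j)%N); apply: Qp_one; exact: one_Qp.
have wnz m : (forall k, (k < m)%N -> Je (a k) (b k) != 0) -> w m != 0.
  elim: m => [|m IH] h; first by rewrite w0 oner_eq0.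
  have hm : w m != 0 by apply: IH => k hk; apply: h; exact: ltnW.
  apply/eqP => h0; have := wS m; rewrite h0 mulr0 => /esym/eqP.
  by rewrite mulf_eq0 (negbTE (h m (ltnSn m))) (negbTE hm).
case: n n1 => // m _; rewrite it /pt.
case: (eqVneq (b m.+1) 0) => // bm _.
have hJ : forall k, (k < m)%N -> Je (a k) (b k) != 0.
  move=> k hk; apply/eqP => hJ.
  have := onek k hJ (m - k.+1)%N.
  have -> : (k.+2 + (m - k.+1))%N = m.+1 by lia.
  by rewrite bm => -[/eqP].
have hw := wnz m hJ.
have am : a m.+1 != 0 by apply/eqP => am; exact: (nz m.+1).
have hmD : mup z (Dh (F m).1 (F m).2) = 2%N.
  apply: mup_Dh; [exact: nz | by rewrite -bS | exact: hw].
have hNv : (Nh (F m).1 (F m).2).[z] = a m.+1 by rewrite hornerNh aS.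
have hmN : mup z (Nh (F m).1 (F m).2) = 0%N.
  by apply: mupNroot; rewrite /root hNv.
have N0 : Nh (F m).1 (F m).2 != 0.
  by apply: contra am => /eqP h; rewrite -hNv h horner0.
rewrite FS /ldeg /rvalue /rord /= (negbTE N0) hmN hmD.
by [].
Qed.
End G.

Unset Implicit Arguments.
Theorem lemma5p1 (R : realType) (n : nat) (v : sphere R[i]) :
  (1 <= n)%N ->
  iter n (rvalue (f1 R[i])) v = None ->
  ldeg (riter (f1 R[i]) n) v = 2%:Z.
Proof. exact: (@main_gen R[i] n v). Qed.
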